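(* Let $a<b$ and let $f,g:[a,b]\to\mathbb{R}$ be differentiable on $[a,b]$ (one-sided derivatives at the endpoints), and suppose $f$ and $g$ are twice differentiable at the point $a$ (from the right). Suppose $g(a)\neq g(b)$ and put $K=\frac{f(b)-f(a)}{g(b)-g(a)}$. If $$\bigl[f'(a)-K\,g'(a)\bigr]\cdot\bigl[f''(a)-K\,g''(a)\bigr]> 0,$$ then there exists $\xi\in(a,b)$ such that $$f'(a)-\frac{f(\xi)-f(a)}{\xi-a}=K\left[g'(a)-\frac{g(\xi)-g(a)}{\xi-a}\right].$$
   Context: Differentiability on a closed interval $[a,b]$ means differentiability on $(a,b)$ together with existence of the one-sided derivatives at $a$ and $b$. *)

(* Defs.v *)
From Stdlib Require Import Reals.
From Coquelicot Require Import Coquelicot.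
Open Scope R_scope.

Definition has_right_deriv (f : R -> R) (x l : R) : Prop :=
  filterlim (fun y => (f y - f x) / (y - x)) (at_right x) (locally l).

Definition has_left_deriv (f : R -> R) (x l : R) : Prop :=
  filterlim (fun y => (f y - f x) / (y - x)) (at_left x) (locally l).

Definition deriv_on_closed (f f' : R -> R) (a b : R) : Prop :=
  (forall x, a < x < b -> is_derive f x (f' x)) /\
  has_right_deriv f a (f' a) /\ has_left_deriv f b (f' b).

(* Main.v *)
Require Import Defs.
From Stdlib Require Import Reals Lra Ranalysis5.
From Coquelicot Require Import Coquelicot.
Open Scope R_scope.

Lemma ballR x e y : ball x e y <-> Rabs (y - x) < e.
Proof. unfold ball; simpl; unfold AbsRing_ball, abs, minus, plus, opp; simpl. tauto. Qed.

Definition rlim (q : R -> R) a l := forall eps, 0 < eps ->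
  exists d, 0 < d /\ forall y, a < y < a + d -> Rabs (q y - l) < eps.
Definition llim (q : R -> R) a l := forall eps, 0 < eps ->
  exists d, 0 < d /\ forall y, a - d < y < a -> Rabs (q y - l) < eps.

Lemma rlim_of q a l : filterlim q (at_right a) (locally l) -> rlim q a l.
Proof.
  intros H eps He. destruct (proj1 (filterlim_locally q l) H (mkposreal eps He)) as [d Hd].
  exists d. split; [apply cond_pos|]. intros y Hy.
  assert (B: ball a d y) by (apply ballR; rewrite Rabs_right; lra).
  specialize (Hd y B ltac:(lra)). apply ballR in Hd. exact Hd.
Qed.
Lemma llim_of q a l : filterlim q (at_left a) (locally l) -> llim q a l.
Proof.
  intros H eps He. destruct (proj1 (filterlim_locally q l) H (mkposreal eps He)) as [d Hd].
  exists d. split; [apply cond_pos|]. intros y Hy.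
  assert (B: ball a d y) by (apply ballR; rewrite Rabs_left; lra).
  specialize (Hd y B ltac:(lra)). apply ballR in Hd. exact Hd.
Qed.

Lemma rlim_sub q1 q2 a l1 l2 : rlim q1 a l1 -> rlim q2 a l2 ->
  rlim (fun y => q1 y - q2 y) a (l1 - l2).
Proof.
  intros H1 H2 eps He. destruct (H1 (eps/2) ltac:(lra)) as [d1 [P1 D1]].
  destruct (H2 (eps/2) ltac:(lra)) as [d2 [P2 D2]].
  exists (Rmin d1 d2). split; [apply Rmin_glb_lt; lra|]. intros y Hy.
  pose proof (Rmin_l d1 d2); pose proof (Rmin_r d1 d2).
  specialize (D1 y ltac:(lra)); specialize (D2 y ltac:(lra)).
  replace (q1 y - q2 y - (l1 - l2)) with ((q1 y - l1) + - (q2 y - l2)) by ring.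
  eapply Rle_lt_trans; [apply Rabs_triang|]. rewrite Rabs_Ropp. lra.
Qed.
Lemma llim_sub q1 q2 a l1 l2 : llim q1 a l1 -> llim q2 a l2 ->
  llim (fun y => q1 y - q2 y) a (l1 - l2).
Proof.
  intros H1 H2 eps He. destruct (H1 (eps/2) ltac:(lra)) as [d1 [P1 D1]].
  destruct (H2 (eps/2) ltac:(lra)) as [d2 [P2 D2]].
  exists (Rmin d1 d2). split; [apply Rmin_glb_lt; lra|]. intros y Hy.
  pose proof (Rmin_l d1 d2); pose proof (Rmin_r d1 d2).
  specialize (D1 y ltac:(lra)); specialize (D2 y ltac:(lra)).
  replace (q1 y - q2 y - (l1 - l2)) with ((q1 y - l1) + - (q2 y - l2)) by ring.
  eapply Rle_lt_trans; [apply Rabs_triang|]. rewrite Rabs_Ropp. lra.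
Qed.

Lemma scal_bound c u eps : Rabs u < eps / (Rabs c + 1) -> 0 < eps -> Rabs (c * u) < eps.
Proof.
  intros H He. rewrite Rabs_mult. pose proof (Rabs_pos c). pose proof (Rabs_pos u).
  assert (Rabs u * (Rabs c + 1) < eps).
  { apply (Rmult_lt_compat_r (Rabs c + 1)) in H; [|lra].
    unfold Rdiv in H. rewrite Rmult_assoc, Rinv_l in H by lra. lra. }
  nra.
Qed.

Lemma rlim_scal c q a l : rlim q a l -> rlim (fun y => c * q y) a (c * l).
Proof.
  intros H eps He. assert (0 < eps / (Rabs c + 1)).
  { pose proof (Rabs_pos c). apply Rdiv_lt_0_compat; lra. }
  destruct (H _ H0) as [d [P D]]. exists d. split; auto. intros y Hy.
  rewrite <- Rmult_minus_distr_l. apply scal_bound; auto.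
Qed.
Lemma llim_scal c q a l : llim q a l -> llim (fun y => c * q y) a (c * l).
Proof.
  intros H eps He. assert (0 < eps / (Rabs c + 1)).
  { pose proof (Rabs_pos c). apply Rdiv_lt_0_compat; lra. }
  destruct (H _ H0) as [d [P D]]. exists d. split; auto. intros y Hy.
  rewrite <- Rmult_minus_distr_l. apply scal_bound; auto.
Qed.

Lemma rlim_ext q q' a l : rlim q a l -> (forall y, a < y -> q' y = q y) -> rlim q' a l.
Proof. intros H E eps He. destruct (H eps He) as [d [P D]]. exists d; split; auto.
  intros y Hy. rewrite E by lra. auto. Qed.
Lemma llim_ext q q' a l : llim q a l -> (forall y, y < a -> q' y = q y) -> llim q' a l.
Proof. intros H E eps He. destruct (H eps He) as [d [P D]]. exists d; split; auto.
  intros y Hy. rewrite E by lra. auto. Qed.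
Lemma core a b h h' L B : a < b -> h a = h b ->
  (forall x, a < x < b -> derivable_pt_lim h x (h' x)) ->
  rlim (fun y => (h y - h a)/(y-a)) a (h' a) ->
  llim (fun y => (h y - h b)/(y-b)) b L ->
  rlim (fun y => (h' y - h' a)/(y-a)) a B ->
  0 < h' a -> 0 < B ->
  exists xi, a < xi < b /\ h' a = (h xi - h a)/(xi - a).
Proof.
  intros Hab Heq Hd HA HL HB PA PB.
  set (A := h' a) in *.
  set (psi := fun x => h x - h a - A * (x - a)).
  assert (Dpsi : forall c, a < c < b -> derivable_pt_lim psi c (h' c - A)).
  { intros c Hc. unfold psi.
    replace (h' c - A) with (h' c - 0 - A * (1 - 0)) by ring.
    apply (derivable_pt_lim_minus (fun x => h x - h a) (fun x => A * (x - a))).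
    - apply (derivable_pt_lim_minus h (fun _ => h a)); [auto| apply derivable_pt_lim_const].
    - apply (derivable_pt_lim_scal (fun x => x - a)).
      apply (derivable_pt_lim_minus (fun x => x) (fun _ => a)); [apply derivable_pt_lim_id| apply derivable_pt_lim_const]. }
  destruct (HB B PB) as [d [Pd Dd]].
  assert (Pos : forall y, a < y < a + d -> h' y - A > 0).
  { intros y Hy. specialize (Dd y Hy). apply Rabs_def2 in Dd.
    assert (0 < (h' y - A) / (y - a)) by lra.
    assert (h' y - A = (h' y - A) / (y - a) * (y - a)) by (field; lra).
    rewrite H0. apply Rmult_lt_0_compat; lra. }
  assert (Incr : forall u v, a < u < v -> v < a + d -> v < b -> psi u < psi v).
  { intros u v Hu Hv Hvb. destruct (MVT_cor2 psi (fun x => h' x - A) u v ltac:(lra)) as [c [Hc1 Hc2]].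
    { intros c Hc. apply Dpsi. lra. }
    specialize (Pos c ltac:(lra)). nra. }
  pose proof (Rmin_l d (b - a)); pose proof (Rmin_r d (b - a)).
  assert (0 < Rmin d (b - a)) by (apply Rmin_glb_lt; lra).
  set (t := a + Rmin d (b - a) / 2).
  set (t' := (a + t) / 2).
  assert (Ht : a < t' < t /\ t < a + d /\ t < b) by (unfold t', t; lra).
  set (cc := psi t - psi t').
  assert (Pcc : 0 < cc) by (unfold cc; pose proof (Incr t' t); lra).
  destruct (HA 1 ltac:(lra)) as [d2 [Pd2 Dd2]].
  pose proof (Rmin_l (Rmin d2 (t' - a)) cc); pose proof (Rmin_r (Rmin d2 (t' - a)) cc).
  pose proof (Rmin_l d2 (t' - a)); pose proof (Rmin_r d2 (t' - a)).
  assert (0 < Rmin (Rmin d2 (t' - a)) cc) by (apply Rmin_glb_lt; [apply Rmin_glb_lt|]; lra).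
  set (s := a + Rmin (Rmin d2 (t' - a)) cc / 2).
  assert (Hs : a < s < t' /\ s < a + d2 /\ s - a < cc) by (unfold s; lra).
  assert (Pst : psi s < psi t') by (apply Incr; lra).
  assert (Psis : - (s - a) < psi s).
  { specialize (Dd2 s ltac:(lra)). apply Rabs_def2 in Dd2.
    assert (psi s = ((h s - h a) / (s - a) - A) * (s - a)) by (unfold psi; field; lra).
    nra. }
  assert (Pt : 0 < psi t) by (unfold cc in *; lra).
  assert (Ft : A - (h t - h a) / (t - a) < 0).
  { assert (Et : A - (h t - h a) / (t - a) = - (psi t / (t - a))) by (unfold psi; field; lra).
    rewrite Et. assert (0 < psi t / (t - a)) by (apply Rdiv_lt_0_compat; lra). lra. }
  destruct (HL 1 ltac:(lra)) as [d3 [Pd3 Dd3]].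
  set (M := Rabs L + 1).
  assert (PM : 0 < M) by (unfold M; pose proof (Rabs_pos L); lra).
  assert (0 < A * (t - a) / M) by (apply Rdiv_lt_0_compat; nra).
  pose proof (Rmin_l (Rmin d3 (b - t)) (A * (t - a) / M)); pose proof (Rmin_r (Rmin d3 (b - t)) (A * (t - a) / M)).
  pose proof (Rmin_l d3 (b - t)); pose proof (Rmin_r d3 (b - t)).
  assert (0 < Rmin (Rmin d3 (b - t)) (A * (t - a) / M)) by (apply Rmin_glb_lt; [apply Rmin_glb_lt|]; lra).
  set (y := b - Rmin (Rmin d3 (b - t)) (A * (t - a) / M) / 2).
  assert (Hy : t < y < b /\ b - d3 < y /\ b - y < A * (t - a) / M) by (unfold y; lra).
  assert (HyM : M * (b - y) < A * (t - a)).
  { assert (A * (t - a) = A * (t - a) / M * M) by (field; lra). nra. }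
  assert (Fy : 0 < A - (h y - h a) / (y - a)).
  { specialize (Dd3 y ltac:(lra)). apply Rabs_def2 in Dd3.
    assert (L >= - Rabs L) by (pose proof (Rabs_pos L); pose proof (Rle_abs (- L)); rewrite Rabs_Ropp in *; lra).
    set (q := (h y - h b) / (y - b)) in *.
    assert (E : (h y - h a) / (y - a) * (y - a) = q * (y - b)) by (unfold q; rewrite Heq; field; lra).
    assert (q * (y - b) < M * (b - y)) by (unfold M in *; nra).
    assert ((h y - h a) / (y - a) < A) by nra. lra. }
  destruct (IVT_interv (fun x => A - (h x - h a) / (x - a)) t y) as [z [Hz Fz]]; auto; try lra.
  { intros z Hz. apply (continuity_pt_minus (fun _ => A) (fun x => (h x - h a) / (x - a))).
    - apply continuity_pt_const. intros u v; auto.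
    - apply (continuity_pt_div (fun x => h x - h a) (fun x => x - a)).
      + apply (continuity_pt_minus h (fun _ => h a)).
        * apply derivable_continuous_pt. exists (h' z). apply Hd. lra.
        * apply continuity_pt_const. intros u v; auto.
      + apply (continuity_pt_minus (fun x => x) (fun _ => a)).
        * apply derivable_continuous_pt, derivable_pt_id.
        * apply continuity_pt_const. intros u v; auto.
      + lra. }
  exists z. split; [lra|]. simpl in Fz. lra.
Qed.

Theorem mainTheorem3 (a b : R) (f g f' g' : R -> R) (f2 g2 : R) :
  a < b ->
  deriv_on_closed f f' a b ->
  deriv_on_closed g g' a b ->
  has_right_deriv f' a f2 ->
  has_right_deriv g' a g2 ->
  g a <> g b ->
  let K := (f b - f a) / (g b - g a) in
  (f' a - K * g' a) * (f2 - K * g2) > 0 ->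
  exists xi, a < xi < b /\
    f' a - (f xi - f a) / (xi - a) = K * (g' a - (g xi - g a) / (xi - a)).
Proof.
  intros Hab [Fi [Fa Fb]] [Gi [Ga Gb]] F2 G2 Hg K HP.
  assert (Hgn : g b - g a <> 0) by (intro; apply Hg; lra).
  assert (HK : f b - f a = K * (g b - g a)) by (unfold K; field; auto).
  assert (Hs : exists s, (s = 1 \/ s = -1) /\ 0 < s * (f' a - K * g' a) /\ 0 < s * (f2 - K * g2)).
  { destruct (Rlt_le_dec 0 (f' a - K * g' a)).
    - exists 1. split; [auto|]. nra.
    - exists (-1). split; [auto|].
      destruct (Rlt_le_dec 0 (f2 - K * g2)); [nra|].
      destruct (Rle_lt_or_eq_dec _ _ r); [|rewrite e in HP; lra].
      destruct (Rle_lt_or_eq_dec _ _ r0); [|rewrite e in HP; lra]. nra. }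
  destruct Hs as [s [Hs1 [Hs2 Hs3]]].
  assert (Hs0 : s <> 0) by (destruct Hs1; lra).
  set (h := fun x => s * (f x - K * g x)).
  set (h' := fun x => s * (f' x - K * g' x)).
  assert (Ecomb : forall (F G : R -> R) x y, y - x <> 0 ->
     (s * (F y - K * G y) - s * (F x - K * G x)) / (y - x)
     = s * ((F y - F x) / (y - x) - K * ((G y - G x) / (y - x)))).
  { intros F G x y Hxy. field. auto. }
  destruct (core a b h h' (s * (f' b - K * g' b)) (s * (f2 - K * g2))) as [xi [Hxi Exi]]; auto.
  - unfold h. nra.
  - intros x Hx. unfold h, h'. apply derivable_pt_lim_scal.
    apply (derivable_pt_lim_minus f (fun y => K * g y)).
    + apply is_derive_Reals; auto.
    + apply derivable_pt_lim_scal. apply is_derive_Reals; auto.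
  - eapply rlim_ext.
    + apply rlim_scal. apply rlim_sub; [apply rlim_of, Fa| apply rlim_scal, rlim_of, Ga].
    + intros y Hy. unfold h. apply Ecomb. lra.
  - eapply llim_ext.
    + apply llim_scal. apply llim_sub; [apply llim_of, Fb| apply llim_scal, llim_of, Gb].
    + intros y Hy. unfold h. apply Ecomb. lra.
  - eapply rlim_ext.
    + apply rlim_scal. apply rlim_sub; [apply rlim_of, F2| apply rlim_scal, rlim_of, G2].
    + intros y Hy. unfold h'. apply Ecomb. lra.
  - exists xi. split; auto. unfold h, h' in Exi.
    rewrite Ecomb in Exi by lra.
    apply Rmult_eq_reg_l in Exi; auto. lra.
Qed.
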